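(* (i) Let $p\ge 1/4$. Then for all $r\in(0,1)$, $$\frac\pi2(1-r)^p<K(r)<\frac{\pi}{2(1-r)^p}.$$ (ii) Let $p\in(0,1/4)$ and let $x_p$ be the unique zero in $(0,1)$ of $E(x)+((1-2p)x-1)K(x)$. Then for all $r\in(0,x_p)$, $$\frac{\pi}{2(1-r)^p}<K(r)<\frac{(1-x_p)^pK(x_p)}{(1-r)^p}.$$
   Context: $K(x)={\cal K}(\sqrt x)$ and $E(x)={\cal E}(\sqrt x)$ for $x\in[0,1)$, where ${\cal K}(r)=\int_0^{\pi/2}(1-r^2\sin^2t)^{-1/2}dt$ and ${\cal E}(r)=\int_0^{\pi/2}(1-r^2\sin^2t)^{1/2}dt$ are the complete elliptic integrals of the first and second kind. *)

(* Defs.v *)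
From Stdlib Require Import Reals.
From Coquelicot Require Import Coquelicot.
Open Scope R_scope.

Definition calK (r : R) : R :=
  RInt (fun t => / sqrt (1 - r ^ 2 * (sin t) ^ 2)) 0 (PI / 2).
Definition calE (r : R) : R :=
  RInt (fun t => sqrt (1 - r ^ 2 * (sin t) ^ 2)) 0 (PI / 2).

Definition K (x : R) : R := calK (sqrt x).
Definition E (x : R) : R := calE (sqrt x).

Definition zfun (p x : R) : R := E x + ((1 - 2 * p) * x - 1) * K x.

(* Main.v *)
Require Import Defs.
From Stdlib Require Import Reals.
From Coquelicot Require Import Coquelicot.
From Stdlib Require Import Lra.
Open Scope R_scope.

Definition Dd (x t : R) := 1 - x * sin t ^ 2.
Lemma Dd_pos x t : x < 1 -> 0 < Dd x t.
Proof.
  intros Hx; unfold Dd.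
  pose proof (SIN_bound t) as Hs.
  assert (0 <= sin t ^ 2 <= 1) by (split; nra).
  destruct (Rle_lt_dec x 0); nra.
Qed.

Lemma loc_lt1 x : x < 1 -> locally x (fun y => y < 1).
Proof. intros; now apply (open_lt 1). Qed.

Lemma exd_cont (f : R -> R) x : ex_derive f x -> continuous f x.
Proof. intros H. exact (ex_derive_continuous (K:=R_AbsRing) (V:=R_NormedModule) f x H). Qed.

Lemma cont_of_pt f x : continuity_pt f x -> continuous f x.
Proof. intros H; now apply continuity_pt_filterlim. Qed.

Lemma cont_to_pt f x : continuous f x -> continuity_pt f x.
Proof. intros H; now apply continuity_pt_filterlim. Qed.

Lemma invsqrt_cont x t : x < 1 -> continuous (fun t => / sqrt (Dd x t)) t.
Proof.
  intros Hx. apply exd_cont. unfold Dd.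
  pose proof (Dd_pos x t Hx) as H; unfold Dd in H.
  auto_derive. repeat split; try lra.
  replace (1 + - (x * (sin t * (sin t * 1)))) with (1 - x * sin t ^ 2) by ring.
  apply Rgt_not_eq, sqrt_lt_R0; lra.
Qed.

Lemma integrand_cont (q : R -> R) x t : (forall t, continuous q t) -> x < 1 ->
  continuous (fun t => q t / sqrt (Dd x t)) t.
Proof.
  intros Hq Hx. apply (continuous_mult q (fun t => / sqrt (Dd x t))).
  apply Hq. now apply invsqrt_cont.
Qed.

Lemma integrand_ex (q : R -> R) x a b : (forall t, continuous q t) -> x < 1 ->
  ex_RInt (fun t => q t / sqrt (Dd x t)) a b.
Proof.
  intros Hq Hx. apply (ex_RInt_continuous (V:=R_CompleteNormedModule)). intros; now apply integrand_cont.
Qed.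

Definition dq (q : R -> R) x t := q t * sin t ^ 2 / (2 * (Dd x t * sqrt (Dd x t))).

Lemma dq_is_derive (q:R->R) x t : x < 1 ->
  is_derive (fun u => q t / sqrt (Dd u t)) x (dq q x t).
Proof.
  intros Hx. pose proof (Dd_pos x t Hx) as H. unfold dq, Dd in *.
  auto_derive.
  - replace (1 + - (x * (sin t * (sin t * 1)))) with (1 - x * sin t ^ 2) by ring.
    repeat split; try lra. apply Rgt_not_eq, sqrt_lt_R0; lra.
  - replace (1 + - (x * (sin t * (sin t * 1)))) with (1 - x * sin t ^ 2) by ring.
    assert (0 < sqrt (1 - x * sin t ^ 2)) by (apply sqrt_lt_R0; lra).
    assert (HS : sqrt (1 - x * sin t ^ 2) * sqrt (1 - x * sin t ^ 2) = 1 - x * sin t ^ 2) by (apply sqrt_sqrt; lra).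
    set (S := sqrt (1 - x * sin t ^ 2)) in *. rewrite <- HS. field. lra.
Qed.

Lemma dq_cont2d (q:R->R) x t : (forall t, continuous q t) -> x < 1 ->
  continuity_2d_pt (dq q) x t.
Proof.
  intros Hq Hx. unfold dq.
  assert (HD : continuity_2d_pt Dd x t).
  { unfold Dd. apply continuity_2d_pt_minus. apply continuity_2d_pt_const.
    apply continuity_2d_pt_mult. apply continuity_2d_pt_id1.
    apply (continuity_1d_2d_pt_comp (fun s => sin s ^ 2) (fun _ v => v)).
    apply cont_to_pt. apply exd_cont. auto_derive. auto.
    apply continuity_2d_pt_id2. }
  pose proof (Dd_pos x t Hx).
  apply continuity_2d_pt_mult.
  - apply continuity_2d_pt_mult.
    + apply (continuity_1d_2d_pt_comp q (fun _ v => v)).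
      apply cont_to_pt, Hq. apply continuity_2d_pt_id2.
    + apply (continuity_1d_2d_pt_comp (fun s => sin s ^ 2) (fun _ v => v)).
      apply cont_to_pt. apply exd_cont. auto_derive. auto.
      apply continuity_2d_pt_id2.
  - apply continuity_2d_pt_inv.
    + apply continuity_2d_pt_mult. apply continuity_2d_pt_const.
      apply continuity_2d_pt_mult. exact HD.
      apply (continuity_1d_2d_pt_comp sqrt Dd). apply continuity_pt_sqrt; lra.
      exact HD.
    + assert (0 < sqrt (Dd x t)) by (apply sqrt_lt_R0; lra). nra.
Qed.

Definition Iq (q : R -> R) (x : R) : R := RInt (fun t => q t / sqrt (Dd x t)) 0 (PI / 2).

Lemma Iq_derive (q:R->R) x : (forall t, continuous q t) -> x < 1 ->
  is_derive (Iq q) x (RInt (dq q x) 0 (PI / 2)).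
Proof.
  intros Hq Hx.
  assert (E : RInt (dq q x) 0 (PI/2) =
              RInt (fun t => Derive (fun u => q t / sqrt (Dd u t)) x) 0 (PI/2)).
  { apply RInt_ext. intros t _. symmetry. apply is_derive_unique.
    now apply dq_is_derive. }
  rewrite E. unfold Iq.
  apply (is_derive_RInt_param (fun u t => q t / sqrt (Dd u t))).
  - apply filter_imp with (2 := loc_lt1 x Hx). intros y Hy t _.
    eexists. now apply dq_is_derive.
  - intros t _.
    apply continuity_2d_pt_ext_loc with (f := dq q).
    + exists (mkposreal (1 - x) ltac:(lra)). intros u v Hu _. simpl in Hu.
      symmetry. apply is_derive_unique. apply dq_is_derive.
      apply Rabs_def2 in Hu. lra.
    + now apply dq_cont2d.
  - apply filter_imp with (2 := loc_lt1 x Hx). intros y Hy.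
    now apply integrand_ex.
Qed.

Definition one : R -> R := fun _ => 1.
Definition cs2 : R -> R := fun t => cos t ^ 2.
Definition Kf := Iq one.
Definition Af := Iq cs2.

Lemma one_cont t : continuous one t.
Proof. apply exd_cont. unfold one. auto_derive. auto. Qed.
Lemma cs2_cont t : continuous cs2 t.
Proof. apply exd_cont. unfold cs2. auto_derive. auto. Qed.

Lemma dq_cont_t (q : R -> R) x t : (forall t, continuous q t) -> x < 1 -> continuous (dq q x) t.
Proof.
  intros Hq Hx. unfold dq.
  apply (continuous_ext (fun t => mult (q t) (sin t ^ 2 / (2 * (Dd x t * sqrt (Dd x t)))))).
  { intros; unfold mult; simpl; unfold Rdiv; ring. }
  apply (continuous_mult q (fun t => sin t ^ 2 / (2 * (Dd x t * sqrt (Dd x t))))).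
  apply Hq. apply exd_cont. pose proof (Dd_pos x t Hx) as H. unfold Dd in *.
  auto_derive.
  replace (1 + - (x * (sin t * (sin t * 1)))) with (1 - x * sin t ^ 2) by ring.
  repeat split; try lra.
  assert (0 < sqrt (1 - x * sin t ^ 2)) by (apply sqrt_lt_R0; lra).
  apply Rgt_not_eq. nra.
Qed.

Lemma dq_ex (q : R -> R) x a b : (forall t, continuous q t) -> x < 1 -> ex_RInt (dq q x) a b.
Proof.
  intros Hq Hx. apply (ex_RInt_continuous (V:=R_CompleteNormedModule)).
  intros; now apply dq_cont_t.
Qed.

Lemma key x : x < 1 -> 2 * (1 - x) * RInt (dq one x) 0 (PI / 2) = Af x.
Proof.
  intros Hx.
  set (F := fun t => sin t * cos t / sqrt (Dd x t)).
  set (F' := fun t => cos t ^ 2 / sqrt (Dd x t) - 2 * (1 - x) * dq one x t).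
  assert (Hd : forall t, is_derive F t (F' t)).
  { intros t. pose proof (Dd_pos x t Hx) as H. unfold F, F', dq, one, Dd in *.
    auto_derive.
    - replace (1 + - (x * (sin t * (sin t * 1)))) with (1 - x * sin t ^ 2) by ring.
      repeat split; try lra. apply Rgt_not_eq, sqrt_lt_R0; lra.
    - replace (1 + - (x * (sin t * (sin t * 1)))) with (1 - x * sin t ^ 2) by ring.
      assert (HS : sqrt (1 - x * sin t ^ 2) * sqrt (1 - x * sin t ^ 2) = 1 - x * sin t ^ 2) by (apply sqrt_sqrt; lra).
      assert (0 < sqrt (1 - x * sin t ^ 2)) by (apply sqrt_lt_R0; lra).
      set (S := sqrt (1 - x * sin t ^ 2)) in *. rewrite <- HS. field_simplify. 2: lra.
      assert (Hc : cos t ^ 2 = 1 - sin t ^ 2) by (pose proof (sin2_cos2 t); unfold Rsqr in *; nra).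
      assert (HS2: S^2 = 1 - x*sin t^2) by (rewrite <- HS; ring). rewrite HS2, Hc. field; lra. lra. }
  assert (Hc : forall t, continuous F' t).
  { intros t. unfold F'.
    apply (continuous_minus (fun t => cos t ^ 2 / sqrt (Dd x t)) (fun t => 2 * (1 - x) * dq one x t)).
    apply (integrand_cont cs2 x t cs2_cont Hx).
    apply (continuous_scal_r (2 * (1 - x)) (dq one x)).
    apply dq_cont_t; auto. exact one_cont. }
  assert (HI := is_RInt_derive F F' 0 (PI/2) (fun t _ => Hd t) (fun t _ => Hc t)).
  apply is_RInt_unique in HI.
  assert (E0 : RInt F' 0 (PI/2) = 0).
  { rewrite HI. unfold F. rewrite cos_PI2, sin_0. unfold minus, plus, opp; simpl. field.
    split; apply Rgt_not_eq, sqrt_lt_R0, Dd_pos; lra. }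
  clear HI; rename E0 into HI.
  assert (HM : RInt F' 0 (PI/2) = minus (RInt (fun t => cos t ^ 2 / sqrt (Dd x t)) 0 (PI/2))
                                   (RInt (fun t => scal (2 * (1 - x)) (dq one x t)) 0 (PI/2))).
  { rewrite <- RInt_minus. apply RInt_ext. intros; simpl; unfold F', minus, plus, opp, scal; simpl.
    unfold mult; simpl. ring.
    apply (integrand_ex cs2 x _ _ cs2_cont Hx).
    apply (ex_RInt_scal (V:=R_CompleteNormedModule)). apply dq_ex; auto. exact one_cont. }
  rewrite (RInt_scal (V:=R_CompleteNormedModule)) in HM. 2: { apply dq_ex; auto. exact one_cont. }
  rewrite HI in HM. unfold Af, Iq, cs2. unfold minus, plus, opp, scal in HM; simpl in HM.
  unfold mult in HM; simpl in HM. assert (RInt (fun t => cos t ^ 2 / sqrt (Dd x t)) 0 (PI/2) = RInt (fun t => cos t * (cos t * 1) / sqrt (Dd x t)) 0 (PI/2)) by (apply RInt_ext; intros t _; simpl; ring). lra.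
Qed.

Lemma RInt_lin2 (f g : R -> R) a b al be : ex_RInt f a b -> ex_RInt g a b ->
  RInt (fun t => al * f t + be * g t) a b = al * RInt f a b + be * RInt g a b.
Proof.
  intros Hf Hg. apply is_RInt_unique.
  apply (is_RInt_ext (fun t => plus (scal al (f t)) (scal be (g t)))).
  { intros; reflexivity. }
  apply (is_RInt_plus (V:=R_NormedModule)); apply (is_RInt_scal (V:=R_NormedModule));
  apply (RInt_correct (V:=R_CompleteNormedModule)); assumption.
Qed.

Definition w z t := / sqrt (Dd z t).

Lemma w_cont z t : z < 1 -> continuous (w z) t.
Proof. intros; now apply invsqrt_cont. Qed.

Lemma w_ex z a b : z < 1 -> ex_RInt (w z) a b.
Proof. intros. apply (ex_RInt_continuous (V:=R_CompleteNormedModule)). intros; now apply w_cont. Qed.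

Lemma cw_cont z t : z < 1 -> continuous (fun t => cos t ^ 2 * w z t) t.
Proof. intros. apply (continuous_mult cs2 (w z)). apply cs2_cont. now apply w_cont. Qed.

Lemma cw_ex z a b : z < 1 -> ex_RInt (fun t => cos t ^ 2 * w z t) a b.
Proof. intros. apply (ex_RInt_continuous (V:=R_CompleteNormedModule)). intros; now apply cw_cont. Qed.

Lemma Kf_w z : Kf z = RInt (w z) 0 (PI / 2).
Proof. unfold Kf, Iq. apply RInt_ext. intros; simpl; unfold one, w, Rdiv; ring. Qed.

Lemma Af_w z : Af z = RInt (fun t => cos t ^ 2 * w z t) 0 (PI / 2).
Proof. unfold Af, Iq. apply RInt_ext. intros; simpl; unfold cs2, w, Rdiv; ring. Qed.

Lemma w_pos z t : z < 1 -> 0 < w z t.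
Proof. intros. unfold w. apply Rinv_0_lt_compat, sqrt_lt_R0, Dd_pos; auto. Qed.

Lemma RInt_zero a b : RInt (fun _ => 0) a b = 0.
Proof. rewrite RInt_const. unfold scal; simpl; unfold mult; simpl; ring. Qed.

Lemma Kf_pos z : z < 1 -> 0 < Kf z.
Proof.
  intros Hz. rewrite Kf_w. rewrite <- (RInt_zero 0 (PI/2)) at 1.
  apply RInt_lt. pose proof PI_RGT_0; lra.
  intros; now apply w_cont.
  intros; apply continuous_const.
  intros; now apply w_pos.
Qed.

Lemma sin2_strict t1 t2 : 0 <= t1 -> t1 < t2 -> t2 <= PI / 2 -> sin t1 ^ 2 < sin t2 ^ 2.
Proof.
  intros. pose proof PI_RGT_0.
  assert (sin t1 < sin t2) by (apply sin_increasing_1; lra).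
  assert (0 <= sin t1) by (apply sin_ge_0; lra). nra.
Qed.

Lemma sin2_bounds t : 0 <= sin t ^ 2 <= 1.
Proof. pose proof (SIN_bound t). split; nra. Qed.

Definition psi x y t := sqrt (Dd x t) / sqrt (Dd y t).

Lemma psi_cont x y t : x < 1 -> y < 1 -> continuous (psi x y) t.
Proof.
  intros Hx Hy. apply exd_cont. unfold psi.
  pose proof (Dd_pos x t Hx). pose proof (Dd_pos y t Hy). unfold Dd in *.
  auto_derive.
  replace (1 + - (x * (sin t * (sin t * 1)))) with (1 - x * sin t ^ 2) by ring.
  replace (1 + - (y * (sin t * (sin t * 1)))) with (1 - y * sin t ^ 2) by ring.
  repeat split; try lra; apply Rgt_not_eq, sqrt_lt_R0; lra.
Qed.

Lemma psi_lt x y t1 t2 : x < y -> y < 1 -> 0 <= t1 -> t1 < t2 -> t2 <= PI / 2 ->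
  psi x y t1 < psi x y t2.
Proof.
  intros Hxy Hy H1 H12 H2.
  pose proof (sin2_strict t1 t2 H1 H12 H2) as Hs.
  pose proof (sin2_bounds t1). pose proof (sin2_bounds t2).
  assert (Hx : x < 1) by lra.
  pose proof (Dd_pos x t1 Hx). pose proof (Dd_pos x t2 Hx).
  pose proof (Dd_pos y t1 Hy). pose proof (Dd_pos y t2 Hy).
  unfold psi.
  assert (0 < sqrt (Dd y t1)) by (apply sqrt_lt_R0; lra).
  assert (0 < sqrt (Dd y t2)) by (apply sqrt_lt_R0; lra).
  apply (Rmult_lt_reg_r (sqrt (Dd y t1) * sqrt (Dd y t2))). nra.
  replace (sqrt (Dd x t1) / sqrt (Dd y t1) * (sqrt (Dd y t1) * sqrt (Dd y t2)))
    with (sqrt (Dd x t1 * Dd y t2)) by (rewrite sqrt_mult by lra; field; lra).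
  replace (sqrt (Dd x t2) / sqrt (Dd y t2) * (sqrt (Dd y t1) * sqrt (Dd y t2)))
    with (sqrt (Dd x t2 * Dd y t1)) by (rewrite sqrt_mult by lra; field; lra).
  apply sqrt_lt_1. nra. nra.
  unfold Dd in *. nra.
Qed.

Lemma psi_le x y t1 t2 : x < y -> y < 1 -> 0 <= t1 -> t1 <= t2 -> t2 <= PI / 2 ->
  psi x y t1 <= psi x y t2.
Proof.
  intros. destruct (Req_dec t1 t2). subst; lra.
  left; apply psi_lt; lra.
Qed.

Lemma w_psi x y t : x < 1 -> y < 1 -> w y t = psi x y t * w x t.
Proof.
  intros. unfold w, psi.
  assert (0 < sqrt (Dd x t)) by (apply sqrt_lt_R0, Dd_pos; lra).
  assert (0 < sqrt (Dd y t)) by (apply sqrt_lt_R0, Dd_pos; lra).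
  field; lra.
Qed.

Lemma psi0 x y : psi x y 0 = 1.
Proof. unfold psi, Dd. rewrite sin_0. replace (1 - x * 0 ^ 2) with 1 by ring.
  replace (1 - y * 0 ^ 2) with 1 by ring. rewrite sqrt_1. field. Qed.


Lemma RInt_mulc (f : R -> R) a b c : ex_RInt f a b ->
  RInt (fun t => c * f t) a b = c * RInt f a b.
Proof.
  intros Hf. apply is_RInt_unique.
  apply (is_RInt_ext (fun t => scal c (f t))). { intros; reflexivity. }
  apply (is_RInt_scal (V:=R_NormedModule)). apply (RInt_correct (V:=R_CompleteNormedModule)); auto.
Qed.

Lemma ex_mulc (f : R -> R) a b c : ex_RInt f a b -> ex_RInt (fun t => c * f t) a b.
Proof. intros Hf. exact (ex_RInt_scal (V:=R_CompleteNormedModule) f a b c Hf). Qed.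

Lemma RInt_lin4 (f1 f2 f3 f4 : R -> R) a b c1 c2 c3 c4 :
  ex_RInt f1 a b -> ex_RInt f2 a b -> ex_RInt f3 a b -> ex_RInt f4 a b ->
  RInt (fun t => c1 * f1 t + c2 * f2 t + c3 * f3 t + c4 * f4 t) a b =
  c1 * RInt f1 a b + c2 * RInt f2 a b + c3 * RInt f3 a b + c4 * RInt f4 a b.
Proof.
  intros H1 H2 H3 H4. apply is_RInt_unique.
  apply (is_RInt_ext (fun t => plus (plus (plus (scal c1 (f1 t)) (scal c2 (f2 t))) (scal c3 (f3 t))) (scal c4 (f4 t)))).
  { intros; reflexivity. }
  apply (is_RInt_plus (V:=R_NormedModule)); [apply (is_RInt_plus (V:=R_NormedModule)); [apply (is_RInt_plus (V:=R_NormedModule))|]|];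
  apply (is_RInt_scal (V:=R_NormedModule));
  apply (RInt_correct (V:=R_CompleteNormedModule)); assumption.
Qed.

Lemma cheb x y : x < y -> y < 1 -> Af y * Kf x < Af x * Kf y.
Proof.
  intros Hxy Hy. assert (Hx : x < 1) by lra. pose proof PI_RGT_0 as HPI.
  pose proof (Kf_pos x Hx) as HKx.
  set (k := Kf y / Kf x).
  set (P := psi x y (PI / 2)).
  assert (HP1 : 1 <= P) by (rewrite <- (psi0 x y); apply psi_le; lra).
  assert (HKxy : Kf x <= Kf y).
  { rewrite !Kf_w. apply RInt_le. lra. apply w_ex; lra. apply w_ex; lra.
    intros t Ht. rewrite (w_psi x y t) by lra.
    assert (1 <= psi x y t) by (rewrite <- (psi0 x y); apply psi_le; lra).
    pose proof (w_pos x t Hx). nra. }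
  assert (HKy : Kf y <= P * Kf x).
  { rewrite !Kf_w. rewrite <- RInt_mulc by (apply w_ex; lra). apply RInt_le. lra. apply w_ex; lra.
    apply ex_mulc, w_ex; lra.
    intros t Ht. rewrite (w_psi x y t) by lra.
    assert (psi x y t <= P) by (apply psi_le; lra).
    pose proof (w_pos x t Hx). nra. }
  assert (Hk1 : 1 <= k) by (unfold k; apply (Rmult_le_reg_r (Kf x)); [lra|]; field_simplify; lra).
  assert (Hk2 : k <= P) by (unfold k; apply (Rmult_le_reg_r (Kf x)); [lra|]; field_simplify; lra).
  assert (Hcont : continuity (psi x y)) by (intros t; apply cont_to_pt, psi_cont; lra).
  destruct (IVT_gen (psi x y) 0 (PI / 2) k Hcont) as [t0 [Ht0 Hpt0]].
  { rewrite psi0. fold P. rewrite Rmin_left, Rmax_right by lra. lra. }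
  rewrite Rmin_left, Rmax_right in Ht0 by lra.
  set (c0 := cos t0 ^ 2).
  set (g := fun t => (cos t ^ 2 - c0) * (w y t - k * w x t)).
  assert (Hgw : forall t, w y t - k * w x t = (psi x y t - k) * w x t).
  { intros t. rewrite (w_psi x y t) by lra. ring. }
  assert (Hc0 : 0 <= cos t0) by (apply cos_ge_0; lra).
  assert (Hglt : forall t, 0 <= t <= PI / 2 -> t <> t0 -> g t < 0).
  { intros t Ht Hne. unfold g. rewrite Hgw. pose proof (w_pos x t Hx).
    assert (0 <= cos t) by (apply cos_ge_0; lra).
    destruct (Rlt_or_le t t0) as [Hlt|Hle].
    - assert (cos t0 < cos t) by (apply cos_decreasing_1; lra).
      assert (psi x y t < psi x y t0) by (apply psi_lt; lra).
      unfold c0. rewrite Hpt0 in *. assert (0 < cos t ^ 2 - cos t0 ^ 2) by nra.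
      assert ((psi x y t - k) * w x t < 0) by nra. nra.
    - assert (t0 < t) by lra.
      assert (cos t < cos t0) by (apply cos_decreasing_1; lra).
      assert (psi x y t0 < psi x y t) by (apply psi_lt; lra).
      unfold c0. rewrite Hpt0 in *. assert (cos t ^ 2 - cos t0 ^ 2 < 0) by nra.
      assert (0 < (psi x y t - k) * w x t) by nra. nra. }
  assert (Hgle : forall t, 0 <= t <= PI / 2 -> g t <= 0).
  { intros t Ht. destruct (Req_dec t t0). subst t. unfold g, c0. right; ring.
    left; apply Hglt; auto. }
  assert (Hgc : forall t, continuous g t).
  { intros t. unfold g.
    apply (continuous_mult (fun t => cos t ^ 2 - c0) (fun t => w y t - k * w x t)).
    apply exd_cont. auto_derive. auto.
    apply (continuous_minus (w y) (fun t => k * w x t)). apply w_cont; lra.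
    apply (continuous_scal_r k (w x)). apply w_cont; lra. }
  assert (Hgex : forall a b, ex_RInt g a b).
  { intros a b. apply (ex_RInt_continuous (V:=R_CompleteNormedModule)). intros; apply Hgc. }
  assert (Hneg : RInt g 0 (PI / 2) < 0).
  { rewrite <- (RInt_Chasles g 0 t0 (PI/2)) by apply Hgex.
    unfold plus; simpl.
    assert (H2 : RInt g t0 (PI/2) <= 0).
    { rewrite <- (RInt_zero t0 (PI/2)). apply RInt_le. lra. apply Hgex.
      apply (ex_RInt_const (V:=R_CompleteNormedModule)). intros; apply Hgle; lra. }
    destruct (Req_dec t0 0) as [E|NE].
    - rewrite E in *. rewrite RInt_point. unfold zero; simpl.
      assert (RInt g 0 (PI/2) < RInt (fun _ => 0) 0 (PI/2)).
      { apply RInt_lt. lra. intros; apply continuous_const. intros; apply Hgc.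
        intros; apply Hglt; lra. }
      rewrite RInt_zero in H. lra.
    - assert (RInt g 0 t0 < RInt (fun _ => 0) 0 t0).
      { apply RInt_lt. lra. intros; apply continuous_const. intros; apply Hgc.
        intros; apply Hglt; lra. }
      rewrite RInt_zero in H. lra. }
  assert (Hval : RInt g 0 (PI / 2) = Af y - k * Af x - c0 * (Kf y - k * Kf x)).
  { rewrite !Af_w, !Kf_w.
    rewrite (RInt_ext g (fun t => 1 * (cos t ^ 2 * w y t) + (- k) * (cos t ^ 2 * w x t)
                                + (- c0) * w y t + (c0 * k) * w x t)).
    2: { intros; unfold g; simpl; ring. }
    rewrite (RInt_lin4 (fun t => cos t ^ 2 * w y t) (fun t => cos t ^ 2 * w x t) (w y) (w x)).
    match goal with |- ?a = ?b => change (a = b :> R) end. ring. apply cw_ex; lra. apply cw_ex; lra. apply w_ex; lra. apply w_ex; lra. }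
  assert (Hkx : k * Kf x = Kf y) by (unfold k; field; lra).
  rewrite Hval, Hkx in Hneg.
  assert (Af y - k * Af x < 0) by lra.
  assert (Af y * Kf x - k * Kf x * Af x < 0) by nra.
  rewrite Hkx in H0. lra.
Qed.

Ltac toR := match goal with |- ?a = ?b => change (a = b :> R) end.

Lemma w0 t : w 0 t = 1.
Proof. unfold w, Dd. replace (1 - 0 * sin t ^ 2) with 1 by ring. rewrite sqrt_1. apply Rinv_1. Qed.

Lemma Kf0 : Kf 0 = PI / 2.
Proof.
  rewrite Kf_w. rewrite (RInt_ext _ (fun _ => 1)). 2: { intros; simpl; apply w0. }
  rewrite RInt_const. unfold scal; simpl; unfold mult; simpl. ring.
Qed.

Lemma Af0 : Af 0 = PI / 4.
Proof.
  rewrite Af_w. rewrite (RInt_ext _ (fun t => cos t ^ 2)). 2: { intros; simpl; rewrite w0; ring. }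
  apply is_RInt_unique.
  set (F := fun t => (t + sin t * cos t) / 2).
  replace (PI / 4) with (minus (F (PI/2)) (F 0)).
  2: { unfold F, minus, plus, opp; simpl. rewrite cos_PI2, sin_0. field. }
  apply (is_RInt_derive (V:=R_CompleteNormedModule)).
  - intros t _. unfold F. auto_derive. auto.
    pose proof (sin2_cos2 t) as H. unfold Rsqr in H. nra.
  - intros t _. apply exd_cont. auto_derive. auto.
Qed.

Lemma Kf_ge x : 0 <= x < 1 -> PI / 2 <= Kf x.
Proof.
  intros Hx. rewrite <- Kf0. rewrite !Kf_w. pose proof PI_RGT_0.
  apply RInt_le. lra. apply w_ex; lra. apply w_ex; lra.
  intros t _. rewrite w0. unfold w.
  pose proof (Dd_pos x t (proj2 Hx)). pose proof (sin2_bounds t).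
  assert (sqrt (Dd x t) <= 1).
  { rewrite <- sqrt_1. apply sqrt_le_1; try lra. unfold Dd; nra. }
  rewrite <- Rinv_1. apply Rinv_le_contravar. apply sqrt_lt_R0; lra. lra.
Qed.

Lemma cos_int : RInt cos 0 (PI / 2) = 1.
Proof.
  apply is_RInt_unique.
  replace 1 with (minus (sin (PI/2)) (sin 0)).
  2: { unfold minus, plus, opp; simpl. rewrite sin_PI2, sin_0. ring. }
  apply (is_RInt_derive (V:=R_CompleteNormedModule)).
  - intros t _. auto_derive. auto. ring.
  - intros t _. apply exd_cont. auto_derive. auto.
Qed.

Lemma Af_le1 y : y < 1 -> Af y <= 1.
Proof.
  intros Hy. rewrite Af_w, <- cos_int. pose proof PI_RGT_0.
  apply RInt_le. lra. apply cw_ex; lra.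
  apply (ex_RInt_continuous (V:=R_CompleteNormedModule)). intros; apply exd_cont; auto_derive; auto.
  intros t Ht. pose proof (w_pos y t Hy). pose proof (Dd_pos y t Hy).
  assert (Hc : 0 <= cos t) by (apply cos_ge_0; lra).
  assert (HS : cos t <= sqrt (Dd y t)).
  { rewrite <- (sqrt_pow2 (cos t)) by lra. apply sqrt_le_1. nra. lra.
    unfold Dd. pose proof (sin2_cos2 t) as H2; unfold Rsqr in H2. pose proof (sin2_bounds t). nra. }
  assert (0 < sqrt (Dd y t)) by (apply sqrt_lt_R0; lra).
  unfold w. apply (Rmult_le_reg_r (sqrt (Dd y t))). lra.
  replace (cos t ^ 2 * / sqrt (Dd y t) * sqrt (Dd y t)) with (cos t ^ 2) by (field; lra).
  nra.
Qed.

Lemma Kf_big y : 0 <= y < 1 ->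
  ln (PI / 2 + sqrt (1 - y)) - ln (sqrt (1 - y)) <= Kf y.
Proof.
  intros Hy. pose proof PI_RGT_0 as HPI. set (d := sqrt (1 - y)).
  assert (Hd : 0 < d) by (apply sqrt_lt_R0; lra).
  assert (Hd2 : d * d = 1 - y) by (apply sqrt_sqrt; lra).
  set (f := fun t => / (PI / 2 - t + d)).
  assert (HI : is_RInt f 0 (PI/2) (ln (PI / 2 + d) - ln d)).
  { set (F := fun t => - ln (PI / 2 - t + d)).
    replace (ln (PI / 2 + d) - ln d) with (minus (F (PI/2)) (F 0)).
    2: { unfold F, minus, plus, opp; simpl. replace (PI/2 - PI/2 + d) with d by ring.
         replace (PI/2 - 0 + d) with (PI/2 + d) by ring. ring. }
    apply (is_RInt_derive (V:=R_CompleteNormedModule)).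
    - intros t Ht. rewrite Rmin_left, Rmax_right in Ht by lra. unfold F, f.
      auto_derive. lra. field. lra.
    - intros t Ht. rewrite Rmin_left, Rmax_right in Ht by lra. apply exd_cont. unfold f.
      auto_derive. lra. }
  rewrite <- (is_RInt_unique _ _ _ _ HI). rewrite Kf_w.
  apply RInt_le. lra. eexists; exact HI. apply w_ex; lra.
  intros t Ht. unfold f, w.
  pose proof (Dd_pos y t (proj2 Hy)).
  assert (Hc : 0 <= cos t) by (apply cos_ge_0; lra).
  assert (Hcu : cos t <= PI / 2 - t).
  { rewrite <- sin_shift. destruct (Req_dec t (PI/2)) as [E|NE].
    - rewrite E. replace (PI/2 - PI/2) with 0 by ring. rewrite sin_0. lra.
    - left. apply sin_lt_x. lra. }
  assert (HS : sqrt (Dd y t) <= PI / 2 - t + d).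
  { rewrite <- (sqrt_pow2 (PI / 2 - t + d)) by lra. apply sqrt_le_1; try lra. nra.
    unfold Dd. pose proof (sin2_cos2 t) as H2; unfold Rsqr in H2. pose proof (sin2_bounds t). nra. }
  apply Rinv_le_contravar. apply sqrt_lt_R0; lra. lra.
Qed.

Lemma K_Kf x : 0 <= x -> K x = Kf x.
Proof.
  intros Hx. rewrite Kf_w. unfold K, calK. apply RInt_ext. intros t _. simpl.
  assert (Hs : sqrt x * (sqrt x * 1) = x) by (rewrite Rmult_1_r; apply sqrt_sqrt; lra).
  rewrite Hs. reflexivity.
Qed.

Lemma E_eq x : 0 <= x < 1 -> E x = (1 - x) * Kf x + x * Af x.
Proof.
  intros Hx. rewrite Kf_w, Af_w.
  rewrite <- (RInt_lin2 (w x) (fun t => cos t ^ 2 * w x t) 0 (PI/2) (1 - x) x).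
  2: apply w_ex; lra. 2: apply cw_ex; lra.
  unfold E, calE.
  apply RInt_ext. intros t _. rewrite pow2_sqrt by lra. toR.
  pose proof (Dd_pos x t (proj2 Hx)) as HD.
  assert (HS : sqrt (Dd x t) * sqrt (Dd x t) = Dd x t) by (apply sqrt_sqrt; lra).
  assert (0 < sqrt (Dd x t)) by (apply sqrt_lt_R0; lra).
  change (1 - x * sin t ^ 2) with (Dd x t). unfold w.
  set (S := sqrt (Dd x t)) in *.
  apply (Rmult_eq_reg_r S). 2: lra.
  replace (((1 - x) * / S + x * (cos t ^ 2 * / S)) * S) with ((1 - x) + x * cos t ^ 2) by (field; lra).
  rewrite HS. unfold Dd. pose proof (sin2_cos2 t) as H2; unfold Rsqr in H2. nra.
Qed.

Lemma zfun_eq p x : 0 <= x < 1 -> zfun p x = x * (Af x - 2 * p * Kf x).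
Proof.
  intros Hx. unfold zfun. rewrite E_eq, K_Kf by lra. ring.
Qed.


Definition gp p r := Rpower (1 - r) p * Kf r.
Definition dgp p r := Rpower (1 - r) p / (2 * (1 - r)) * (Af r - 2 * p * Kf r).

Lemma Kf_derive x : x < 1 -> is_derive Kf x (Af x / (2 * (1 - x))).
Proof.
  intros Hx. unfold Kf. 
  pose proof (key x Hx) as Hk.
  assert (E : Af x / (2 * (1 - x)) = RInt (dq one x) 0 (PI / 2)).
  { rewrite <- Hk. field. lra. }
  rewrite E.
  apply Iq_derive. exact one_cont. exact Hx.
Qed.

Lemma gp_derive p r : r < 1 -> is_derive (gp p) r (dgp p r).
Proof.
  intros Hr. unfold gp, dgp.
  assert (HR : is_derive (fun r => Rpower (1 - r) p) r (Rpower (1 - r) p * (- p / (1 - r)))).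
  { unfold Rpower. auto_derive. lra. replace (1 + - r) with (1 - r) by ring. field. lra. }
  assert (H : is_derive (fun r => Rpower (1 - r) p * Kf r) r
     (Rpower (1 - r) p * (- p / (1 - r)) * Kf r + Rpower (1 - r) p * (Af r / (2 * (1 - r))))).
  { apply (is_derive_mult (fun r => Rpower (1 - r) p) Kf). exact HR. apply Kf_derive; auto.
    intros; apply Rmult_comm. }
  replace (Rpower (1 - r) p / (2 * (1 - r)) * (Af r - 2 * p * Kf r)) with
     (Rpower (1 - r) p * (- p / (1 - r)) * Kf r + Rpower (1 - r) p * (Af r / (2 * (1 - r)))).
  exact H. field. lra.
Qed.

Lemma gp_mvt p a b : a < b -> b < 1 -> exists c, a < c < b /\ gp p b - gp p a = dgp p c * (b - a).
Proof.
  intros Hab Hb. destruct (MVT_cor2 (gp p) (dgp p) a b Hab) as [c [Hc1 Hc2]].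
  { intros c Hc. apply is_derive_Reals. apply gp_derive. lra. }
  exists c; split; auto.
Qed.

Lemma gp0 p : gp p 0 = PI / 2.
Proof. unfold gp, Rpower. rewrite Rminus_0_r, ln_1, Rmult_0_r, exp_0, Kf0. ring. Qed.

Lemma h_strict x y : x < y -> y < 1 -> Af y / Kf y < Af x / Kf x.
Proof.
  intros Hxy Hy. pose proof (cheb x y Hxy Hy).
  pose proof (Kf_pos x ltac:(lra)). pose proof (Kf_pos y Hy).
  apply (Rmult_lt_reg_r (Kf x * Kf y)). nra.
  replace (Af y / Kf y * (Kf x * Kf y)) with (Af y * Kf x) by (field; lra).
  replace (Af x / Kf x * (Kf x * Kf y)) with (Af x * Kf y) by (field; lra). lra.
Qed.

Lemma h0 : Af 0 / Kf 0 = 1 / 2.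
Proof. rewrite Af0, Kf0. pose proof PI_RGT_0. field. lra. Qed.

Lemma h_cont c z : z < 1 -> continuity_pt (fun z => c - Af z / Kf z) z.
Proof.
  intros Hz. apply cont_to_pt, exd_cont.
  pose proof (Iq_derive cs2 z cs2_cont Hz) as HA.
  pose proof (Kf_derive z Hz) as HK.
  pose proof (Kf_pos z Hz).
  eexists. apply (is_derive_minus (fun _ => c) (fun z => Af z / Kf z)).
  apply is_derive_const. apply is_derive_div. exact HA. exact HK. lra.
Qed.

Lemma exists_y p : 0 < p < 1 / 4 -> exists y, 0 < y < 1 /\ Af y < 2 * p * Kf y.
Proof.
  intros Hp. set (M := 1 / (2 * p)). set (d := exp (- M)).
  assert (HM : 0 < M) by (unfold M; apply Rdiv_lt_0_compat; lra).
  assert (Hd0 : 0 < d) by apply exp_pos.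
  assert (Hd1 : d < 1) by (unfold d; rewrite <- exp_0; apply exp_increasing; lra).
  exists (1 - d * d). split. split; nra.
  assert (Hy : 0 <= 1 - d * d < 1) by (split; nra).
  pose proof (Kf_big (1 - d * d) Hy) as HK.
  replace (1 - (1 - d * d)) with (d ^ 2) in HK by ring.
  rewrite sqrt_pow2 in HK by lra.
  unfold d at 2 in HK. rewrite ln_exp in HK.
  assert (0 < ln (PI / 2 + d)).
  { rewrite <- ln_1. apply ln_increasing. lra. pose proof PI2_1. lra. }
  pose proof (Af_le1 (1 - d * d) (proj2 Hy)).
  assert (M < Kf (1 - d * d)) by lra.
  assert (2 * p * M = 1) by (unfold M; field; lra).
  nra.
Qed.

Lemma Rpower_pos u p : 0 < Rpower u p.
Proof. unfold Rpower; apply exp_pos. Qed.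

Theorem mainTheorem16 :
  (forall p : R, 1 / 4 <= p ->
     forall r : R, 0 < r < 1 ->
       PI / 2 * Rpower (1 - r) p < K r /\ K r < PI / (2 * Rpower (1 - r) p))
  /\
  (forall p : R, 0 < p < 1 / 4 ->
     (exists! xp : R, (0 < xp < 1) /\ zfun p xp = 0) /\
     (forall xp : R, 0 < xp < 1 -> zfun p xp = 0 ->
        forall r : R, 0 < r < xp ->
          PI / (2 * Rpower (1 - r) p) < K r /\
          K r < Rpower (1 - xp) p * K xp / Rpower (1 - r) p)).
Proof.
  pose proof PI_RGT_0 as HPI.
  split.
  - intros p Hp r Hr. rewrite K_Kf by lra.
    assert (Hln : ln (1 - r) < 0) by (rewrite <- ln_1; apply ln_increasing; lra).
    assert (HR1 : Rpower (1 - r) p < 1).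
    { unfold Rpower. assert (exp (p * ln (1 - r)) < exp 0) by (apply exp_increasing; nra).
      rewrite exp_0 in H; exact H. }
    pose proof (Rpower_pos (1 - r) p) as HRp.
    split.
    + pose proof (Kf_ge r ltac:(lra)). nra.
    + destruct (gp_mvt (1/4) 0 r ltac:(lra) ltac:(lra)) as [c [Hc Heq]].
      rewrite gp0 in Heq.
      assert (Hhc : Af c / Kf c < 1 / 2) by (rewrite <- h0; apply h_strict; lra).
      pose proof (Kf_pos c ltac:(lra)).
      assert (Af c - 2 * (1/4) * Kf c < 0).
      { apply (Rmult_lt_reg_r (/ Kf c)). apply Rinv_0_lt_compat; lra.
        replace ((Af c - 2 * (1/4) * Kf c) * / Kf c) with (Af c / Kf c - 1/2) by (field; lra). lra. }
      assert (dgp (1/4) c < 0).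
      { unfold dgp. pose proof (Rpower_pos (1 - c) (1/4)).
        assert (0 < Rpower (1 - c) (1 / 4) / (2 * (1 - c))) by (apply Rdiv_lt_0_compat; lra). nra. }
      assert (Hg : gp (1/4) r < PI / 2) by nra.
      unfold gp in Hg.
      assert (Hpow : Rpower (1 - r) p <= Rpower (1 - r) (1/4)).
      { unfold Rpower. destruct (Req_dec p (1/4)) as [E|NE]. rewrite E; lra.
        left; apply exp_increasing; nra. }
      pose proof (Kf_ge r ltac:(lra)).
      assert (Rpower (1 - r) p * Kf r < PI / 2) by nra.
      apply (Rmult_lt_reg_r (Rpower (1 - r) p)). lra.
      replace (PI / (2 * Rpower (1 - r) p) * Rpower (1 - r) p) with (PI / 2) by (field; lra). lra.
  - intros p Hp. split.
    + destruct (exists_y p Hp) as [y [Hy HAy]].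
      pose proof (Kf_pos y ltac:(lra)).
      destruct (Ranalysis5.IVT_interv (fun z => 2 * p - Af z / Kf z) 0 y) as [z [Hz Hfz]].
      { intros a Ha. apply h_cont. lra. }
      lra.
      { rewrite h0. lra. }
      { assert (Af y / Kf y < 2 * p).
        { apply (Rmult_lt_reg_r (Kf y)). lra. replace (Af y / Kf y * Kf y) with (Af y) by (field; lra). lra. }
        lra. }
      assert (Hz0 : z <> 0) by (intros E; rewrite E, h0 in Hfz; lra).
      assert (Hhz : Af z / Kf z = 2 * p) by lra.
      exists z. split.
      * split. lra. rewrite zfun_eq by lra.
        pose proof (Kf_pos z ltac:(lra)).
        replace (Af z) with (Af z / Kf z * Kf z) by (field; lra). rewrite Hhz. ring.
      * intros x' [Hx' Hzx']. rewrite zfun_eq in Hzx' by lra.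
        pose proof (Kf_pos x' ltac:(lra)).
        assert (Haux : Af x' - 2 * p * Kf x' = 0).
        { apply (Rmult_eq_reg_l x'). rewrite Hzx'; ring. lra. }
        assert (Hhx : Af x' / Kf x' = 2 * p).
        { replace (Af x') with (2 * p * Kf x') by lra. field; lra. }
        destruct (Rtotal_order z x') as [Hl|[He|Hg]]; auto.
        -- pose proof (h_strict z x' Hl ltac:(lra)). lra.
        -- pose proof (h_strict x' z Hg ltac:(lra)). lra.
    + intros xp Hxp Hz r Hr.
      rewrite zfun_eq in Hz by lra.
      pose proof (Kf_pos xp ltac:(lra)).
      assert (Haux : Af xp - 2 * p * Kf xp = 0).
      { apply (Rmult_eq_reg_l xp). rewrite Hz; ring. lra. }
      assert (Hhx : Af xp / Kf xp = 2 * p).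
      { replace (Af xp) with (2 * p * Kf xp) by lra. field; lra. }
      assert (Hpos : forall c, 0 <= c < xp -> 0 < dgp p c).
      { intros c Hc. pose proof (Kf_pos c ltac:(lra)).
        assert (Af xp / Kf xp < Af c / Kf c) by (apply h_strict; lra).
        assert (0 < Af c - 2 * p * Kf c).
        { apply (Rmult_lt_reg_r (/ Kf c)). apply Rinv_0_lt_compat; lra.
          replace ((Af c - 2 * p * Kf c) * / Kf c) with (Af c / Kf c - 2 * p) by (field; lra). lra. }
        unfold dgp. pose proof (Rpower_pos (1 - c) p).
        assert (0 < Rpower (1 - c) p / (2 * (1 - c))) by (apply Rdiv_lt_0_compat; lra). nra. }
      rewrite !K_Kf by lra.
      pose proof (Rpower_pos (1 - r) p) as HRp.
      split.
      * destruct (gp_mvt p 0 r ltac:(lra) ltac:(lra)) as [c [Hc Heq]].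
        rewrite gp0 in Heq. pose proof (Hpos c ltac:(lra)).
        assert (Hg : PI / 2 < gp p r) by nra. unfold gp in Hg.
        apply (Rmult_lt_reg_r (Rpower (1 - r) p)). lra.
        replace (PI / (2 * Rpower (1 - r) p) * Rpower (1 - r) p) with (PI / 2) by (field; lra). lra.
      * destruct (gp_mvt p r xp ltac:(lra) ltac:(lra)) as [c [Hc Heq]].
        pose proof (Hpos c ltac:(lra)).
        assert (Hg : gp p r < gp p xp) by nra. unfold gp in Hg.
        apply (Rmult_lt_reg_r (Rpower (1 - r) p)). lra.
        replace (Rpower (1 - xp) p * Kf xp / Rpower (1 - r) p * Rpower (1 - r) p)
          with (Rpower (1 - xp) p * Kf xp) by (field; lra). lra.
Qed.
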